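(* Let $W:\mathcal X\to\mathcal Y$ be a cyclo-symmetric DMC with $|\mathcal Y|>2|\mathcal X|$, let $L\ge2|\mathcal X|$ be a multiple of $|\mathcal X|$, and let the input distribution be uniform, $\pi(x)=1/|\mathcal X|$. Then $$\min\big\{I(W)-I(Q):\ Q\preccurlyeq W,\ |Q|\le L,\ Q\text{ cyclo-symmetric}\big\}\le \nu(|\mathcal X|)\,L^{-\frac{2}{|\mathcal X|-1}}.$$
   Context: $I(\cdot)$ is input–output mutual information (natural log) under the given input distribution. $Q\preccurlyeq W$ means there is a channel $\Phi$ from the output alphabet of $W$ to that of $Q$ with $Q(z|x)=\sum_yW(y|x)\Phi(z|y)$; $|Q|$ is the output alphabet size of $Q$. A channel $W:\mathcal X\to\mathcal Y$ is cyclo-symmetric if $\mathcal X=\{0,1,\dots,|\mathcal X|-1\}$, $|\mathcal Y|$ is a multiple of $|\mathcal X|$, and $\mathcal Y$ is partitioned into $|\mathcal Y|/|\mathcal X|$ disjoint sets $\mathcal Y_i=\{y_i^{(0)},\dots,y_i^{(|\mathcal X|-1)}\}$ such that $W(y_i^{(0)}|x)=W(y_i^{(\theta)}|x+\theta)$ for all $i$, all $x$ and all $0\le\theta\le|\mathcal X|-1$, with $x+\theta$ taken modulo $|\mathcal X|$. The constant is $$\nu(n)=\frac{\pi n(n-1)}{2\left(\sqrt{1+\frac{1}{2(n-1)}}-1\right)^2}\left(\frac{2n}{\Gamma\!\left(1+\frac{n-1}{2}\right)}\right)^{\frac{2}{n-1}},$$ with $\pi=3.14159\ldots$ and $\Gamma$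 the Gamma function. *)

(* Defs.v *)
From Stdlib Require Import Reals Lra Lia.
Open Scope R_scope.

(* A channel with input alphabet {0,..,nx-1} and output alphabet {0,..,ny-1}
   is represented by its transition function W y x = W(y|x). *)
Definition channel := nat -> nat -> R.

Fixpoint rsum (n : nat) (f : nat -> R) : R :=
  match n with O => 0 | S k => rsum k f + f k end.

Definition is_channel (nx ny : nat) (W : channel) : Prop :=
  (forall x y, (x < nx)%nat -> (y < ny)%nat -> 0 <= W y x) /\
  (forall x, (x < nx)%nat -> rsum ny (fun y => W y x) = 1).

Definition mi_uniform (nx ny : nat) (W : channel) : R :=
  rsum nx (fun x => rsum ny (fun y =>
    if Req_EM_T (W y x) 0 then 0
    else (/ INR nx) * W y x *
         ln (W y x / ((/ INR nx) * rsum nx (fun x' => W y x'))))).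

Definition degraded (nx ny nz : nat) (Q W : channel) : Prop :=
  exists Phi : channel, is_channel ny nz Phi /\
    forall x z, (x < nx)%nat -> (z < nz)%nat ->
      Q z x = rsum ny (fun y => W y x * Phi z y).

(* cyclo-symmetric: |Y| = k |X| and Y is partitioned into k sets
   Y_i = {f i 0, ..., f i (|X|-1)} (f a bijection from [0,k)x[0,|X|) onto
   [0,|Y|)) with W(y_i^(0)|x) = W(y_i^(theta)| x+theta mod |X|). *)
Definition cyclo_symmetric (nx ny : nat) (W : channel) : Prop :=
  exists (k : nat) (f : nat -> nat -> nat),
    ny = (k * nx)%nat /\
    (forall i t, (i < k)%nat -> (t < nx)%nat -> (f i t < ny)%nat) /\
    (forall i t i' t', (i < k)%nat -> (t < nx)%nat -> (i' < k)%nat -> (t' < nx)%nat ->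
        f i t = f i' t' -> i = i' /\ t = t') /\
    (forall y, (y < ny)%nat -> exists i t, (i < k)%nat /\ (t < nx)%nat /\ f i t = y) /\
    (forall i x t, (i < k)%nat -> (x < nx)%nat -> (t < nx)%nat ->
        W (f i 0%nat) x = W (f i t) ((x + t) mod nx)%nat).

(* gamma_half k = Gamma(1 + k/2), defined via Gamma(1)=1, Gamma(3/2)=sqrt(pi)/2
   and Gamma(s+1) = s Gamma(s). *)
Fixpoint gamma_half (k : nat) : R :=
  match k with
  | O => 1
  | S O => sqrt PI / 2
  | S (S j as k') => (1 + INR j / 2) * gamma_half j
  end.

Definition nu (n : nat) : R :=
  PI * INR n * (INR n - 1)
  / (2 * (sqrt (1 + / (2 * (INR n - 1))) - 1) ^ 2)
  * Rpower (2 * INR n / gamma_half (n - 1)) (2 / (INR n - 1)).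

(* Main.v *)
Require Import Defs.
From Stdlib Require Import Reals.
Open Scope R_scope.
From Stdlib Require Import Lra Lia Arith.

Lemma rsum_ext n f g : (forall i, (i < n)%nat -> f i = g i) -> rsum n f = rsum n g.
Proof. induction n; simpl; intros H; auto. rewrite IHn by (intros; apply H; lia). rewrite (H n) by lia. auto. Qed.

Lemma rsum_plus n f g : rsum n (fun i => f i + g i) = rsum n f + rsum n g.
Proof. induction n; simpl; [lra|]. rewrite IHn. lra. Qed.

Lemma rsum_minus n f g : rsum n (fun i => f i - g i) = rsum n f - rsum n g.
Proof. induction n; simpl; [lra|]. rewrite IHn. lra. Qed.

Lemma rsum_scal n c f : rsum n (fun i => c * f i) = c * rsum n f.
Proof. induction n; simpl; [lra|]. rewrite IHn. lra. Qed.

Lemma rsum_const n c : rsum n (fun _ => c) = INR n * c.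
Proof. induction n; simpl rsum; [simpl; lra|]. rewrite IHn, S_INR. lra. Qed.

Lemma rsum_zero n : rsum n (fun _ => 0) = 0.
Proof. rewrite rsum_const. lra. Qed.

Lemma rsum_le n f g : (forall i, (i < n)%nat -> f i <= g i) -> rsum n f <= rsum n g.
Proof. induction n; simpl; intros H; [lra|]. specialize (IHn (fun i Hi => H i ltac:(lia))). specialize (H n ltac:(lia)). lra. Qed.

Lemma rsum_nonneg n f : (forall i, (i < n)%nat -> 0 <= f i) -> 0 <= rsum n f.
Proof. intros H. rewrite <- (rsum_zero n). apply rsum_le. auto. Qed.

Lemma rsum_term_le n f i : (forall j, (j < n)%nat -> 0 <= f j) -> (i < n)%nat -> f i <= rsum n f.
Proof.
  induction n; simpl; intros H Hi; [lia|].
  assert (0 <= rsum n f) by (apply rsum_nonneg; intros; apply H; lia).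
  destruct (Nat.eq_dec i n).
  - subst. lra.
  - assert (f i <= rsum n f) by (apply IHn; [intros; apply H; lia| lia]).
    specialize (H n ltac:(lia)). lra.
Qed.

Lemma rsum_swap n m (f : nat -> nat -> R) :
  rsum n (fun i => rsum m (fun j => f i j)) = rsum m (fun j => rsum n (fun i => f i j)).
Proof.
  induction n; simpl.
  - rewrite rsum_zero. auto.
  - rewrite IHn, <- rsum_plus. auto.
Qed.

Lemma rsum_delta n t0 (g : nat -> R) : (t0 < n)%nat ->
  rsum n (fun t => if Nat.eqb t t0 then g t else 0) = g t0.
Proof.
  induction n; intros H; [lia|]. simpl.
  destruct (Nat.eq_dec t0 n).
  - subst. rewrite Nat.eqb_refl.
    rewrite (rsum_ext _ _ (fun _ => 0)), rsum_zero; [lra|].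
    intros i Hi. destruct (Nat.eqb_spec i n); [lia|auto].
  - rewrite IHn by lia. destruct (Nat.eqb_spec n t0); [lia|lra].
Qed.

Lemma rsum_first n f : rsum (S n) f = f 0%nat + rsum n (fun i => f (S i)).
Proof. induction n; simpl in *; [lra|]. rewrite IHn. lra. Qed.

Lemma rsum_app p q f : rsum (p + q) f = rsum p f + rsum q (fun u => f (p + u)%nat).
Proof. induction q; simpl. rewrite Nat.add_0_r; lra. rewrite Nat.add_succ_r. simpl. rewrite IHq. lra. Qed.

Lemma rsum_prod a b h : rsum (a * b) h = rsum a (fun c => rsum b (fun u => h (c * b + u)%nat)).
Proof.
  induction a; simpl; auto.
  rewrite Nat.add_comm, rsum_app, IHa. auto.
Qed.

Lemma rsum_if n (P : nat -> bool) f :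
  rsum n (fun i => if P i then f i else 0) <= rsum n (fun i => if P i then f i else 0). 
Proof. lra. Qed.


Lemma rsum_S n f : rsum (S n) f = rsum n f + f n.
Proof. reflexivity. Qed.

Lemma rsum_shift1 n g : (0 < n)%nat -> rsum n (fun x => g ((x + 1) mod n)%nat) = rsum n g.
Proof.
  intros Hn. destruct n as [|m]; [lia|].
  rewrite (rsum_first m g), rsum_S.
  rewrite (rsum_ext m _ (fun i => g (S i))).
  - replace ((m+1) mod S m)%nat with 0%nat. lra.
    replace (m+1)%nat with (S m) by lia. rewrite Nat.Div0.mod_same. auto.
  - intros i Hi. f_equal. rewrite Nat.mod_small; lia.
Qed.

Lemma rsum_shift n c g : (0 < n)%nat -> rsum n (fun x => g ((x + c) mod n)%nat) = rsum n g.
Proof.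
  intros Hn. revert g. induction c; intros g.
  - apply rsum_ext. intros. rewrite Nat.add_0_r, Nat.mod_small; auto.
  - rewrite (rsum_ext n _ (fun x => (fun y => g ((y + 1) mod n)%nat) ((x + c) mod n)%nat)).
    + rewrite (IHc (fun y => g ((y + 1) mod n)%nat)). apply rsum_shift1; auto.
    + intros i Hi. f_equal. rewrite Nat.Div0.add_mod_idemp_l. f_equal. lia.
Qed.


Definition ent (v s : R) : R := if Req_EM_T v 0 then 0 else v * ln (v / s).
Definition Fv (n : nat) (v : nat -> R) : R := rsum n (fun x => ent (v x) (rsum n v)).

Lemma ln_le_sub1 x : 0 < x -> ln x <= x - 1.
Proof. intros. pose proof (exp_ineq1_le (ln x)). rewrite exp_ln in H0; lra. Qed.

Lemma ent0 s : ent 0 s = 0.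
Proof. unfold ent. destruct (Req_EM_T 0 0); lra. Qed.

Lemma ent_term v s m a b : 0 <= s -> a * s <= v -> v <= b * s -> 0 <= v -> 0 < m ->
  ent v s <= v * ln m + (((a+b) * v - a * b * s) / m - v).
Proof.
  intros Hs Ha Hb Hv Hm. unfold ent. destruct (Req_EM_T v 0) as [E|E].
  - subst. destruct (Req_dec s 0) as [Es|Es].
    + subst. replace (((a + b) * 0 - a * b * 0) / m - 0) with 0 by (field; lra). lra.
    + assert (a <= 0) by nra. assert (0 <= b) by nra.
      assert (0 <= - a * b * s / m).
      { unfold Rdiv. apply Rmult_le_pos; [|left; apply Rinv_0_lt_compat; auto]. nra. }
      replace (((a + b) * 0 - a * b * s) / m - 0) with (- a * b * s / m) by (field; lra). lra.
  - assert (Hv' : 0 < v) by lra.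
    assert (Hs' : 0 < s) by (destruct (Req_dec s 0) as [Es|Es]; [subst; lra|lra]).
    assert (Eq : ln (v / s) = ln m + ln (v / (s * m))).
    { assert (0 < v / (s * m)) by (apply Rdiv_lt_0_compat; nra).
      rewrite <- ln_mult by lra. f_equal. field. lra. }
    rewrite Eq.
    pose proof (ln_le_sub1 (v / (s * m)) ltac:(apply Rdiv_lt_0_compat; nra)).
    assert (v * ln (v / (s * m)) <= v * (v / (s * m) - 1)) by (apply Rmult_le_compat_l; lra).
    assert (v * (v / (s * m)) <= ((a + b) * v - a * b * s) / m).
    { assert (v * v <= (a+b) * v * s - a * b * s * s) by nra.
      apply Rmult_le_reg_r with (s * m); [nra|].
      replace (v * (v / (s * m)) * (s * m)) with (v * v) by (field; lra).
      replace (((a + b) * v - a * b * s) / m * (s * m)) with (((a+b) * v * s - a * b * s * s)) by (field; lra).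
      lra. }
    nra.
Qed.

Lemma JL (k : nat) (P : nat -> bool) (v s : nat -> R) (a b l beta : R) :
  (forall i, (i < k)%nat -> P i = true ->
     0 <= s i /\ a * s i <= v i /\ v i <= b * s i /\ l * s i <= v i /\ 0 <= v i) ->
  0 <= beta ->
  (forall m, 0 < m -> l <= m -> a + b - a * b / m - m <= beta) ->
  rsum k (fun i => if P i then ent (v i) (s i) else 0)
   - ent (rsum k (fun i => if P i then v i else 0)) (rsum k (fun i => if P i then s i else 0))
  <= beta * rsum k (fun i => if P i then s i else 0).
Proof.
  intros H Hbeta Hm.
  set (V := rsum k (fun i => if P i then v i else 0)).
  set (S := rsum k (fun i => if P i then s i else 0)).
  assert (HS0 : 0 <= S).
  { apply rsum_nonneg. intros i Hi. destruct (P i) eqn:E; [apply (H i Hi E)|lra]. }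
  assert (HV0 : 0 <= V).
  { apply rsum_nonneg. intros i Hi. destruct (P i) eqn:E; [apply (H i Hi E)|lra]. }
  assert (HVb : V <= b * S).
  { unfold V, S. rewrite <- rsum_scal. apply rsum_le. intros i Hi.
    destruct (P i) eqn:E; [apply (H i Hi E)|lra]. }
  assert (HVl : l * S <= V).
  { unfold V, S. rewrite <- rsum_scal. apply rsum_le. intros i Hi.
    destruct (P i) eqn:E; [apply (H i Hi E)|lra]. }
  destruct (Req_dec V 0) as [EV|EV].
  - rewrite EV, ent0.
    rewrite (rsum_ext k _ (fun _ => 0)), rsum_zero.
    + nra.
    + intros i Hi. destruct (P i) eqn:E; auto.
      assert (v i <= V).
      { unfold V. replace (v i) with ((fun i => if P i then v i else 0) i) by (rewrite E; auto).
        apply (rsum_term_le k (fun i => if P i then v i else 0) i); auto. intros j Hj. destruct (P j) eqn:E'; [apply (H j Hj E')|lra]. }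
      assert (v i = 0) by (pose proof (H i Hi E); lra). rewrite H1. apply ent0.
  - assert (HVp : 0 < V) by lra.
    assert (HSp : 0 < S).
    { destruct (Req_dec S 0) as [ES|ES]; [|lra]. rewrite ES in HVb. lra. }
    set (m := V / S).
    assert (Hmp : 0 < m) by (apply Rdiv_lt_0_compat; lra).
    assert (Hlm : l <= m).
    { unfold m. apply Rmult_le_reg_r with S; auto. replace (V / S * S) with V by (field; lra). lra. }
    assert (Hsum : rsum k (fun i => if P i then ent (v i) (s i) else 0) <=
       rsum k (fun i => ln m * (if P i then v i else 0) + ((a + b) / m) * (if P i then v i else 0)
                      - (a * b / m) * (if P i then s i else 0) - (if P i then v i else 0))).
    { apply rsum_le. intros i Hi. destruct (P i) eqn:E.
      - destruct (H i Hi E) as (h1 & h2 & h3 & h4 & h5).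
        pose proof (ent_term (v i) (s i) m a b h1 h2 h3 h5 Hmp).
        replace (ln m * v i + (a + b) / m * v i - a * b / m * s i - v i)
          with (v i * ln m + (((a + b) * v i - a * b * s i) / m - v i)) by (field; lra). lra.
      - lra. }
    rewrite !rsum_minus, !rsum_plus, !rsum_scal in Hsum. fold V S in Hsum.
    assert (Ent : ent V S = V * ln m).
    { unfold ent. destruct (Req_EM_T V 0); [lra|]. auto. }
    rewrite Ent.
    pose proof (Hm m Hmp Hlm).
    assert (E2 : (a + b) / m * V - a * b / m * S - V = S * (a + b - a * b / m - m)).
    { unfold m. field. lra. }
    assert (S * (a + b - a * b / m - m) <= S * beta) by (apply Rmult_le_compat_l; lra).
    lra.
Qed.


Lemma mi_decomp n m V : (0 < n)%nat -> is_channel n m V ->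
  mi_uniform n m V = / INR n * rsum m (fun y => Fv n (fun x => V y x)) + ln (INR n).
Proof.
  intros Hn [Hnn Hsum]. unfold mi_uniform, Fv. rewrite rsum_swap.
  assert (HnR : 0 < INR n) by (apply lt_0_INR; lia).
  rewrite (rsum_ext m _ (fun y => / INR n * (rsum n (fun x => ent (V y x) (rsum n (fun x' => V y x')))
                                         + ln (INR n) * rsum n (fun x => V y x)))).
  - rewrite rsum_scal, rsum_plus, rsum_scal.
    rewrite (rsum_swap m n (fun y x => V y x)).
    rewrite (rsum_ext n _ (fun _ => 1)) by (intros; apply Hsum; auto).
    rewrite rsum_const. field. lra.
  - intros y Hy. rewrite <- (rsum_scal n (ln (INR n))), <- rsum_plus, <- (rsum_scal n (/ INR n) (fun x => ent (V y x) (rsum n (fun x' => V y x')) + ln (INR n) * V y x)). apply rsum_ext. intros x Hx.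
    unfold ent. destruct (Req_EM_T (V y x) 0) as [E|E].
    + rewrite E. lra.
    + assert (Hv : 0 < V y x) by (pose proof (Hnn x y Hx Hy); lra).
      assert (Hs : V y x <= rsum n (fun x' => V y x')).
      { apply (rsum_term_le n (fun x' => V y x') x); [intros; apply Hnn; auto | auto]. }
      assert (E2 : ln (V y x / (/ INR n * rsum n (fun x' => V y x'))) = ln (V y x / rsum n (fun x' => V y x')) + ln (INR n)).
      { assert (0 < V y x / rsum n (fun x' => V y x')) by (apply Rdiv_lt_0_compat; lra).
        rewrite <- ln_mult by lra. f_equal. field. split; lra. }
      rewrite E2. ring.
Qed.


Lemma Fv_ext n v w : (forall x, (x < n)%nat -> v x = w x) -> Fv n v = Fv n w.
Proof.
  intros H. unfold Fv. rewrite (rsum_ext n v w H). apply rsum_ext. intros x Hx. rewrite H; auto.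
Qed.

Lemma Fv_shift n c v : (0 < n)%nat -> Fv n (fun x => v ((x + c) mod n)%nat) = Fv n v.
Proof.
  intros Hn. unfold Fv. rewrite (rsum_shift n c v Hn).
  apply (rsum_shift n c (fun y => ent (v y) (rsum n v)) Hn).
Qed.

Lemma G1 (k n ny : nat) (f : nat -> nat -> nat) :
  (forall i t i' t', (i < k)%nat -> (t < n)%nat -> (i' < k)%nat -> (t' < n)%nat ->
        f i t = f i' t' -> i = i' /\ t = t') ->
  forall y, (exists i t, (i < k)%nat /\ (t < n)%nat /\ f i t = y) ->
  exists i0 t0, (i0 < k)%nat /\ (t0 < n)%nat /\ f i0 t0 = y /\
   forall h : nat -> nat -> R,
   rsum k (fun i => rsum n (fun t => if Nat.eqb (f i t) y then h i t else 0)) = h i0 t0.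
Proof.
  intros Hinj y (i0 & t0 & Hi0 & Ht0 & Hf). exists i0, t0. repeat split; auto.
  intros h.
  rewrite (rsum_ext k _ (fun i => if Nat.eqb i i0 then h i t0 else 0)).
  - apply (rsum_delta k i0 (fun i => h i t0)); auto.
  - intros i Hi. destruct (Nat.eqb_spec i i0).
    + subst i. rewrite (rsum_ext n _ (fun t => if Nat.eqb t t0 then h i0 t else 0)).
      * apply (rsum_delta n t0 (fun t => h i0 t)); auto.
      * intros t Ht. destruct (Nat.eqb_spec (f i0 t) y); destruct (Nat.eqb_spec t t0); subst; auto.
        -- destruct (Hinj i0 t i0 t0); auto; lia.
        -- congruence.
    + rewrite (rsum_ext n _ (fun _ => 0)) by
        (intros t Ht; destruct (Nat.eqb_spec (f i t) y); auto; subst; destruct (Hinj i t i0 t0); auto; lia).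
      apply rsum_zero.
Qed.

Lemma G2 (k n ny : nat) (f : nat -> nat -> nat) (g : nat -> R) :
  (forall i t, (i < k)%nat -> (t < n)%nat -> (f i t < ny)%nat) ->
  (forall i t i' t', (i < k)%nat -> (t < n)%nat -> (i' < k)%nat -> (t' < n)%nat ->
        f i t = f i' t' -> i = i' /\ t = t') ->
  (forall y, (y < ny)%nat -> exists i t, (i < k)%nat /\ (t < n)%nat /\ f i t = y) ->
  rsum ny g = rsum k (fun i => rsum n (fun t => g (f i t))).
Proof.
  intros Hlt Hinj Hsurj.
  rewrite (rsum_ext ny g (fun y => rsum k (fun i => rsum n (fun t => if Nat.eqb (f i t) y then g y else 0)))).
  - rewrite rsum_swap. apply rsum_ext. intros i Hi. rewrite rsum_swap. apply rsum_ext. intros t Ht.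
    rewrite (rsum_ext ny _ (fun y => if Nat.eqb y (f i t) then g y else 0)).
    + apply rsum_delta. auto.
    + intros y Hy. rewrite Nat.eqb_sym. auto.
  - intros y Hy. destruct (G1 k n ny f Hinj y (Hsurj y Hy)) as (i0 & t0 & _ & _ & _ & Hh).
    rewrite (Hh (fun _ _ => g y)). auto.
Qed.


Fixpoint am (r : nat -> R) (l : nat) : nat :=
  match l with
  | O => O
  | S l' => if Rlt_dec (r (am r l')) (r (S l')) then S l' else am r l'
  end.

Lemma am_le r l : (am r l <= l)%nat.
Proof. induction l; simpl; auto. destruct (Rlt_dec _ _); lia. Qed.

Lemma am_max r l : forall x, (x <= l)%nat -> r x <= r (am r l).
Proof.
  induction l; intros x Hx.
  - replace x with 0%nat by lia. simpl. lra.
  - simpl. destruct (Nat.eq_dec x (S l)).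
    + subst. destruct (Rlt_dec _ _); [lra|lra].
    + specialize (IHl x ltac:(lia)). destruct (Rlt_dec _ _); lra.
Qed.

Definition T (N j : nat) : R := INR j * INR j / (INR N * INR N).

Lemma T_mono N j j' : (0 < N)%nat -> (j <= j')%nat -> T N j <= T N j'.
Proof.
  intros HN Hj. unfold T. assert (0 < INR N) by (apply lt_0_INR; lia).
  apply le_INR in Hj. pose proof (pos_INR j).
  unfold Rdiv. apply Rmult_le_compat_r.
  - left. apply Rinv_0_lt_compat. nra.
  - nra.
Qed.

Fixpoint gc (N : nat) (q : R) (l : nat) : nat :=
  match l with
  | O => O
  | S l' => if Rle_dec (T N (S l')) q then S (gc N q l') else gc N q l'
  end.

Lemma gc_props N q l : (0 < N)%nat -> 0 <= q ->
  (gc N q l <= l)%nat /\ T N (gc N q l) <= q /\ ((gc N q l < l)%nat -> q < T N (S (gc N q l))).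
Proof.
  intros HN Hq. induction l.
  - simpl. repeat split; try lia. unfold T. simpl. replace (0 * 0 / (INR N * INR N)) with 0 by (unfold Rdiv; ring). auto.
  - destruct IHl as (H1 & H2 & H3). simpl. destruct (Rle_dec (T N (S l)) q) as [E|E].
    + repeat split; try lia.
      * pose proof (T_mono N (S (gc N q l)) (S l) HN ltac:(lia)). lra.
      * intros Hlt. exfalso. assert (gc N q l < l)%nat by lia. specialize (H3 H). pose proof (T_mono N (S (gc N q l)) (S l) HN ltac:(lia)). lra.
    + repeat split; try lia; auto.
      intros Hlt. destruct (Nat.eq_dec (gc N q l) l) as [Eq|Ne].
      * rewrite Eq. lra.
      * apply H3. lia.
Qed.

Lemma grid_interval N q : (0 < N)%nat -> 0 <= q -> q <= 1 ->
  (gc N q (N - 1) < N)%nat /\ T N (gc N q (N-1)) <= q /\ q <= T N (S (gc N q (N-1))).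
Proof.
  intros HN Hq0 Hq1. destruct (gc_props N q (N-1) HN Hq0) as (H1 & H2 & H3).
  repeat split; try lia; auto.
  destruct (Nat.eq_dec (gc N q (N-1)) (N-1)) as [Eq|Ne].
  - rewrite Eq. replace (S (N-1)) with N by lia. unfold T.
    replace (INR N * INR N / (INR N * INR N)) with 1. lra.
    field. apply not_0_INR. lia.
  - left. apply H3. lia.
Qed.

Fixpoint enc (N m : nat) (J : nat -> nat) : nat :=
  match m with O => O | S m' => (J (S m') + N * enc N m' J)%nat end.

Fixpoint dec (N m c x : nat) : nat :=
  match m with O => O | S m' => if Nat.eqb x (S m') then (c mod N)%nat else dec N m' (c / N) x end.

Lemma enc_lt N m J : (forall x, (1 <= x <= m)%nat -> (J x < N)%nat) -> (enc N m J < N ^ m)%nat.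
Proof.
  induction m; intros H; simpl; [lia|].
  specialize (IHm (fun x Hx => H x ltac:(lia))). specialize (H (S m) ltac:(lia)). nia.
Qed.

Lemma dec_lt N m c x : (0 < N)%nat -> (dec N m c x < N)%nat.
Proof.
  revert c. induction m; intros c HN; simpl; [lia|].
  destruct (Nat.eqb x (S m)); auto. apply Nat.mod_upper_bound. lia.
Qed.

Lemma dec_enc N m J : (0 < N)%nat -> (forall x, (1 <= x <= m)%nat -> (J x < N)%nat) ->
  forall x, (1 <= x <= m)%nat -> dec N m (enc N m J) x = J x.
Proof.
  intros HN. induction m; intros H x Hx; [lia|]. simpl.
  assert (HJ : (J (S m) < N)%nat) by (apply H; lia).
  destruct (Nat.eqb_spec x (S m)).
  - subst. rewrite Nat.mul_comm, Nat.Div0.mod_add. apply Nat.mod_small; auto.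
  - rewrite Nat.mul_comm, Nat.div_add by lia. rewrite Nat.div_small by auto. simpl.
    apply IHm; [intros; apply H; lia| lia].
Qed.

Fixpoint cntN (M K l : nat) : nat :=
  match l with O => O | S l' => if Nat.leb (S l' ^ K) M then S l' else cntN M K l' end.

Lemma cntN_props M K l : (1 <= K)%nat ->
  (cntN M K l <= l)%nat /\ (cntN M K l ^ K <= M)%nat /\
  (forall j, (j <= l)%nat -> (j ^ K <= M)%nat -> (j <= cntN M K l)%nat).
Proof.
  intros HK. induction l.
  - simpl. repeat split; try lia. rewrite Nat.pow_0_l by lia. lia.
  - destruct IHl as (H1 & H2 & H3). simpl. destruct (Nat.leb_spec (S l ^ K) M).
    + repeat split; try lia. 
    + repeat split; try lia; auto. intros j Hj Hjk. destruct (Nat.eq_dec j (S l)).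
      * subst. lia.
      * apply H3; auto; lia.
Qed.

Lemma pow_ge_self a K : (1 <= K)%nat -> (a <= a ^ K)%nat.
Proof.
  intros HK. destruct a; [simpl; lia|].
  destruct K; [lia|]. simpl. assert (1 <= S a ^ K)%nat. { apply Nat.pow_le_mono_l with (c:=K) in HK. 
  pose proof (Nat.pow_le_mono_l 1 (S a) K ltac:(lia)). rewrite Nat.pow_1_l in H. lia. } nia.
Qed.

Lemma cntN_main M K : (1 <= K)%nat -> (1 <= M)%nat ->
  let N := cntN M K M in (1 <= N)%nat /\ (N ^ K <= M)%nat /\ (M < (N + 1) ^ K)%nat.
Proof.
  intros HK HM N. destruct (cntN_props M K M HK) as (H1 & H2 & H3).
  split; [|split; auto].
  - apply H3; auto. rewrite Nat.pow_1_l. lia.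
  - destruct (Nat.le_gt_cases (N+1) M).
    + destruct (Nat.le_gt_cases ((N+1)^K) M); auto. specialize (H3 (N+1)%nat H H0). unfold N in H3. lia.
    + pose proof (pow_ge_self (N+1) K HK). lia.
Qed.


Definition Pg k := 0 < gamma_half k <= sqrt (INR k + 1) ^ k.

Lemma Pg_step j : Pg j -> Pg (S (S j)).
Proof.
  unfold Pg. intros [H0 H1].
  change (gamma_half (S (S j))) with ((1 + INR j / 2) * gamma_half j).
  pose proof (pos_INR j).
  assert (E2 : INR (S (S j)) = INR j + 2) by (rewrite S_INR, S_INR; ring).
  rewrite E2.
  set (w := INR j + 2). assert (Hw : 2 <= w) by (unfold w; lra).
  assert (Hs : 0 <= sqrt (INR j + 1)) by apply sqrt_pos.
  assert (Hle : sqrt (INR j + 1) <= sqrt (w + 1)) by (apply sqrt_le_1_alt; unfold w; lra).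
  assert (Hp : sqrt (INR j + 1) ^ j <= sqrt (w + 1) ^ j) by (apply pow_incr; lra).
  assert (Hsq : sqrt (w + 1) ^ 2 = w + 1).
  { replace (sqrt (w + 1) ^ 2) with (sqrt (w+1) * sqrt (w+1)) by ring. apply sqrt_sqrt. lra. }
  split.
  - apply Rmult_lt_0_compat; lra.
  - replace (sqrt (w + 1) ^ S (S j)) with (sqrt (w + 1) ^ 2 * sqrt (w + 1) ^ j) by (rewrite <- pow_add; f_equal).
    rewrite Hsq. apply Rmult_le_compat; try lra. unfold w; lra.
Qed.

Lemma gamma_bound k : Pg k.
Proof.
  assert (forall k, Pg k /\ Pg (S k)).
  { induction k0.
    - unfold Pg. simpl. split; [lra|].
      assert (0 < sqrt PI) by (apply sqrt_lt_R0; pose proof PI_RGT_0; lra).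
      split; [lra|].
      assert (sqrt PI <= sqrt 4) by (apply sqrt_le_1_alt; pose proof PI_4; lra).
      assert (sqrt 4 = 2) by (apply sqrt_lem_1; lra).
      assert (sqrt 1 <= sqrt (1 + 1)) by (apply sqrt_le_1_alt; lra). rewrite sqrt_1 in H2.
      lra.
    - destruct IHk0. split; auto. apply Pg_step; auto. }
  apply H.
Qed.

Lemma first_factor K : (1 <= K)%nat ->
  8 * PI * INR (S K) * INR K ^ 3 <=
  PI * INR (S K) * (INR (S K) - 1) / (2 * (sqrt (1 + / (2 * (INR (S K) - 1))) - 1) ^ 2).
Proof.
  intros HK. rewrite S_INR. replace (INR K + 1 - 1) with (INR K) by ring.
  assert (HK1 : 1 <= INR K) by (apply (le_INR 1); lia).
  set (h := / (2 * INR K)).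
  assert (Hh : 0 < h) by (unfold h; apply Rinv_0_lt_compat; lra).
  assert (Hu : sqrt (1 + h) <= 1 + h / 2).
  { rewrite <- (sqrt_square (1 + h/2)) by lra. apply sqrt_le_1_alt. nra. }
  assert (Hl : 1 < sqrt (1 + h)).
  { pose proof (sqrt_lt_1_alt 1 (1 + h) ltac:(lra)). rewrite sqrt_1 in H. lra. }
  set (d := sqrt (1 + h) - 1).
  assert (Hd0 : 0 < d) by (unfold d; lra).
  assert (Hd1 : d <= h / 2) by (unfold d; lra).
  assert (Hd2 : 0 < d ^ 2) by (apply pow_lt; lra).
  assert (Hd2' : d ^ 2 <= h * h / 4) by (replace (d ^ 2) with (d * d) by ring; nra).
  assert (HPI : 0 < PI) by apply PI_RGT_0.
  assert (hK : h * INR K = / 2) by (unfold h; field; lra).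
  apply Rmult_le_reg_r with (2 * d ^ 2); [lra|].
  replace (PI * (INR K + 1) * INR K / (2 * d ^ 2) * (2 * d ^ 2)) with (PI * (INR K + 1) * INR K) by (field; lra).
  assert (Hm : 8 * PI * (INR K + 1) * INR K ^ 3 * (2 * d ^ 2) <= 8 * PI * (INR K + 1) * INR K ^ 3 * (2 * (h * h / 4))).
  { apply Rmult_le_compat_l; [|lra]. assert (0 < INR K ^ 3) by (apply pow_lt; lra). assert (0 <= (INR K + 1) * INR K ^ 3) by (apply Rmult_le_pos; lra). assert (0 <= PI * ((INR K + 1) * INR K ^ 3)) by (apply Rmult_le_pos; lra). lra. }
  replace (8 * PI * (INR K + 1) * INR K ^ 3 * (2 * (h * h / 4))) with (PI * (INR K + 1) * INR K * (4 * (h * INR K) * (h * INR K))) in Hm by field.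
  rewrite hK in Hm. lra.
Qed.


Lemma exp_le' x y : x <= y -> exp x <= exp y.
Proof. intros [H|H]; [left; apply exp_increasing; auto| subst; lra]. Qed.

Lemma numeric K M N : (1 <= K)%nat -> (1 <= N)%nat -> (1 <= M)%nat -> (M < (N + 1) ^ K)%nat ->
  (INR (S K) * INR K ^ 2 + 9 / 4 * INR K) / (INR N * INR N)
  <= nu (S K) * Rpower (INR (S K * M)) (- (2 / (INR (S K) - 1))).
Proof.
  intros HK HN HM HMN.
  pose proof (first_factor K HK) as HFF.
  unfold nu. replace (S K - 1)%nat with K by lia.
  set (FF := PI * INR (S K) * (INR (S K) - 1) / (2 * (sqrt (1 + / (2 * (INR (S K) - 1))) - 1) ^ 2)) in *.
  assert (En : INR (S K) - 1 = INR K) by (rewrite S_INR; ring).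
  rewrite En.
  set (n := INR (S K)) in *.
  set (k := INR K).
  assert (Hk : 1 <= k) by (apply (le_INR 1); lia).
  assert (Hn : n = k + 1) by (unfold n, k; apply S_INR).
  assert (HNr : 1 <= INR N) by (apply (le_INR 1); lia).
  assert (HMr : 1 <= INR M) by (apply (le_INR 1); lia).
  set (e := 2 / k).
  assert (He : 0 < e) by (unfold e; apply Rdiv_lt_0_compat; lra).
  destruct (gamma_bound K) as [G0 G1].
  set (G := gamma_half K) in *.
  fold k in G1. replace (k + 1) with n in G1 by lra.
  assert (Hsn : 0 < sqrt n) by (apply sqrt_lt_R0; lra).
  assert (Hlnsq : 2 * ln (sqrt n) = ln n).
  { replace 2 with (INR 2) by (simpl; ring). rewrite <- ln_pow by auto. f_equal.
    simpl. rewrite Rmult_1_r. apply sqrt_sqrt. lra. }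
  assert (HlnG : ln G <= k * ln n / 2).
  { assert (ln G <= ln (sqrt n ^ K)).
    { destruct G1 as [G1|G1]; [left; apply ln_increasing; auto| rewrite G1; lra]. }
    rewrite ln_pow in H by auto. fold k in H. replace (ln (sqrt n)) with (ln n / 2) in H by lra. lra. }
  assert (Hln2 : 0 < ln 2) by (pose proof ln_lt_2; lra).
  assert (Hlnn : ln (2 * n / G) = ln 2 + ln n - ln G).
  { unfold Rdiv. assert (0 < 2 * n) by lra. assert (0 < / G) by (apply Rinv_0_lt_compat; auto). rewrite ln_mult, ln_mult, ln_Rinv; auto; lra. }

  assert (HlnM : ln (INR M) < k * ln (INR N + 1)).
  { apply lt_INR in HMN. rewrite pow_INR, plus_INR in HMN. simpl in HMN.
    apply ln_increasing in HMN; [|lra]. rewrite ln_pow in HMN by lra. auto. }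
  assert (HL : ln (INR (S K * M)) = ln n + ln (INR M)).
  { rewrite mult_INR. fold n. apply ln_mult; lra. }
  unfold Rpower. rewrite HL, Hlnn.
  assert (Hexp : exp (e * (ln 2 + ln n - ln G)) * exp (- (2 / k) * (ln n + ln (INR M)))
                 >= exp (- ln n) * exp (- (2 * ln (INR N + 1)))).
  { rewrite <- !exp_plus. apply Rle_ge. apply exp_le'.
    assert (e * ln G <= ln n) by (unfold e; apply Rmult_le_reg_l with (k / 2); [lra|];
      replace (k / 2 * (2 / k * ln G)) with (ln G) by (field; lra);
      replace (k / 2 * ln n) with (k * ln n / 2) by (field; lra); auto).
    assert (e * ln (INR M) < 2 * ln (INR N + 1)).
    { unfold e. apply Rmult_lt_reg_l with (k / 2); [lra|].
      replace (k / 2 * (2 / k * ln (INR M))) with (ln (INR M)) by (field; lra).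
      replace (k / 2 * (2 * ln (INR N + 1))) with (k * ln (INR N + 1)) by (field; lra). auto. }
    fold e. assert (0 <= e * ln 2) by (apply Rmult_le_pos; lra).
    assert (0 <= e * ln n).
    { apply Rmult_le_pos; [lra|]. rewrite <- ln_1. destruct (Req_dec n 1); [lra|]. left; apply ln_increasing; lra. }
    nra. }
  rewrite exp_Ropp, exp_Ropp, exp_ln in Hexp by lra.
  replace (2 * ln (INR N + 1)) with (ln ((INR N + 1) ^ 2)) in Hexp by (rewrite ln_pow by lra; simpl; ring).
  rewrite exp_ln in Hexp by (apply pow_lt; lra).
  set (Y := exp (e * (ln 2 + ln n - ln G)) * exp (- (2 / k) * (ln n + ln (INR M)))) in *.
  assert (HY : / (4 * n * (INR N * INR N)) <= Y).
  { assert (/ (4 * n * (INR N * INR N)) <= / n * / (INR N + 1) ^ 2).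
    { rewrite <- Rinv_mult. apply Rinv_le_contravar. apply Rmult_lt_0_compat; [lra|]. apply pow_lt; lra.
      simpl. assert ((INR N+1)*(INR N+1) <= 4*(INR N*INR N)) by nra. assert (0 < n) by lra. replace (4 * n * (INR N * INR N)) with (n * (4*(INR N*INR N))) by ring. rewrite Rmult_1_r. apply Rmult_le_compat_l; lra. }
    lra. }
  assert (HPI : 3 < PI) by (pose proof PI2_3_2; lra).
  assert (Hpos : 0 < 8 * PI * n * k ^ 3).
  { assert (0 < k ^ 3) by (apply pow_lt; lra). assert (0 < n * k ^ 3) by (apply Rmult_lt_0_compat; lra).
    assert (0 < PI * (n * k ^ 3)) by (apply Rmult_lt_0_compat; lra). lra. }
  assert (EY : Y = exp (e * (ln 2 + ln n - ln G)) * exp (- e * (ln n + ln (INR M)))) by (unfold Y, e; reflexivity).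
  replace (FF * exp (e * (ln 2 + ln n - ln G)) * exp (- e * (ln n + ln (INR M)))) with (FF * Y) by (rewrite EY; ring).
  apply Rle_trans with (8 * PI * n * k ^ 3 * / (4 * n * (INR N * INR N))).
  - replace (8 * PI * n * k ^ 3 * / (4 * n * (INR N * INR N))) with ((2 * PI * k ^ 3) / (INR N * INR N)) by (field; lra).
    unfold Rdiv. apply Rmult_le_compat_r; [left; apply Rinv_0_lt_compat; nra|].
    fold k. rewrite Hn. assert (k * k >= k) by nra. assert (k*k*k >= k*k) by nra. assert (0 < k*k*k) by nra. assert (2 * PI * (k*k*k) >= 6 * (k*k*k)) by nra. replace (k^3) with (k*k*k) by ring. replace (k^2) with (k*k) by ring. nra.
  - apply Rmult_le_compat; try lra. left. apply Rinv_0_lt_compat. nra. fold k in HFF. lra.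
Qed.


Lemma quad_bound a b m l : 0 < l -> l <= m -> a + b - a * b / m - m <= (b - a) ^ 2 / (4 * l).
Proof.
  intros Hl Hm.
  replace (a + b - a * b / m - m) with ((b - m) * (m - a) / m) by (field; lra).
  assert (0 <= (b - a) ^ 2 / (4 * l)).
  { unfold Rdiv. apply Rmult_le_pos. apply pow2_ge_0. left; apply Rinv_0_lt_compat; lra. }
  destruct (Rle_dec ((b - m) * (m - a)) 0).
  - assert ((b - m) * (m - a) / m <= 0).
    { unfold Rdiv. assert (0 < / m) by (apply Rinv_0_lt_compat; lra). nra. }
    lra.
  - assert (H1 : (b - m) * (m - a) <= (b - a) ^ 2 / 4).
    { assert (E : (b-a)^2/4 - (b-m)*(m-a) = (a+b-2*m)^2/4) by field. pose proof (pow2_ge_0 (a+b-2*m)). lra. }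
    apply Rle_trans with (((b - a) ^ 2 / 4) / m).
    + unfold Rdiv. apply Rmult_le_compat_r; [left; apply Rinv_0_lt_compat; lra| lra].
    + replace ((b - a) ^ 2 / (4 * l)) with (((b - a) ^ 2 / 4) / l) by (field; lra).
      unfold Rdiv. apply Rmult_le_compat_l.
      * apply Rmult_le_pos; [apply pow2_ge_0|lra].
      * apply Rinv_le_contravar; lra.
Qed.

Lemma T_diff N j : (0 < N)%nat -> T N (S j) - T N j = (2 * INR j + 1) / (INR N * INR N).
Proof. intros HN. unfold T. rewrite S_INR. field. apply not_0_INR. lia. Qed.

Lemma grid_beta N j : (1 <= N)%nat -> (j < N)%nat ->
  forall m, 0 < m -> T N j <= m ->
  T N j + T N (S j) - T N j * T N (S j) / m - m <= 9 / (4 * (INR N * INR N)).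
Proof.
  intros HN Hj m Hm Hl.
  assert (HNr : 1 <= INR N) by (apply (le_INR 1); lia).
  assert (HD : 0 < INR N * INR N) by nra.
  destruct j as [|j].
  - unfold T at 1 3. simpl. replace (0 * 0 / (INR N * INR N)) with 0 by (field; lra).
    replace (T N 1) with (1 / (INR N * INR N)) by (unfold T; simpl; field; lra).
    assert (1 / (INR N * INR N) <= 9 / (4 * (INR N * INR N))).
    { assert (E : 9 / (4 * (INR N * INR N)) = 9 / 4 * (1 / (INR N * INR N))) by (field; lra).
      assert (0 < 1 / (INR N * INR N)) by (apply Rdiv_lt_0_compat; lra). lra. }
    assert (0 * (1 / (INR N * INR N)) / m = 0) by (field; lra). lra.
  - assert (Hj1 : 1 <= INR (S j)) by (apply (le_INR 1); lia).
    assert (HT : 0 < T N (S j)) by (unfold T; apply Rdiv_lt_0_compat; nra).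
    eapply Rle_trans; [apply (quad_bound _ _ m (T N (S j))); auto|].
    set (u := INR (S j)) in *.
    replace (T N (S (S j)) - T N (S j)) with ((2 * u + 1) / (INR N * INR N)) by (rewrite T_diff by lia; auto).
    unfold T. fold u.
    replace (((2 * u + 1) / (INR N * INR N)) ^ 2 / (4 * (u * u / (INR N * INR N))))
      with ((2 * u + 1) * (2 * u + 1) / (4 * (u * u) * (INR N * INR N))) by (field; split; lra).
    apply Rmult_le_reg_r with (4 * (u * u) * (INR N * INR N)).
    + assert (0 < u * u) by nra. nra.
    + replace ((2 * u + 1) * (2 * u + 1) / (4 * (u * u) * (INR N * INR N)) * (4 * (u * u) * (INR N * INR N))) with ((2 * u + 1) * (2 * u + 1)) by (field; split; nra).
      replace (9 / (4 * (INR N * INR N)) * (4 * (u * u) * (INR N * INR N))) with (9 * (u * u)) by (field; lra).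
      nra.
Qed.


Definition eps (n K N : nat) : R := (INR n * INR K ^ 2 + 9 / 4 * INR K) / (INR N * INR N).

Lemma rsum_if_out n (b : bool) f : (if b then rsum n f else 0) = rsum n (fun x => if b then f x else 0).
Proof. destruct b; auto. rewrite rsum_zero. auto. Qed.

Lemma class_bound (n K N k : nat) (rho : nat -> nat -> R) (P : nat -> bool) (J : nat -> nat) :
  n = S K -> (1 <= N)%nat ->
  (forall i x, (i < k)%nat -> (x < n)%nat -> 0 <= rho i x) ->
  (forall i x, (i < k)%nat -> (x < n)%nat -> rho i x <= rho i 0%nat) ->
  (forall x, (J x < N)%nat) ->
  (forall i x, (i < k)%nat -> P i = true -> (1 <= x <= K)%nat ->
     T N (J x) * rsum n (rho i) <= rho i x <= T N (S (J x)) * rsum n (rho i)) ->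
  rsum k (fun i => if P i then Fv n (rho i) else 0)
   - Fv n (fun x => rsum k (fun i => if P i then rho i x else 0))
  <= eps n K N * rsum k (fun i => if P i then rsum n (rho i) else 0).
Proof.
  intros Hn HN Hpos Hmax HJ Hint.
  set (s := fun i => rsum n (rho i)).
  assert (Hs : forall i, (i < k)%nat -> 0 <= s i) by (intros; apply rsum_nonneg; auto).
  set (SS := rsum k (fun i => if P i then s i else 0)).
  assert (HS : rsum n (fun x => rsum k (fun i => if P i then rho i x else 0)) = SS).
  { rewrite rsum_swap. apply rsum_ext. intros i Hi. unfold s. rewrite rsum_if_out. auto. }
  unfold Fv at 2. rewrite HS.
  rewrite (rsum_ext k _ (fun i => rsum n (fun x => if P i then ent (rho i x) (s i) else 0)))
    by (intros; unfold Fv; rewrite rsum_if_out; auto).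
  rewrite rsum_swap, <- rsum_minus.
  set (term := fun x => rsum k (fun i => if P i then ent (rho i x) (s i) else 0) -
                        ent (rsum k (fun i => if P i then rho i x else 0)) SS).
  fold term. change (rsum k (fun i => if P i then rsum n (rho i) else 0)) with SS.
  assert (HNr : 1 <= INR N) by (apply (le_INR 1); lia).
  assert (Hgrid : forall x, (x < K)%nat -> term (S x) <= 9 / (4 * (INR N * INR N)) * SS).
  { intros x Hx. unfold term.
    apply (JL k P (fun i => rho i (S x)) s (T N (J (S x))) (T N (S (J (S x)))) (T N (J (S x)))).
    - intros i Hi HP. destruct (Hint i (S x) Hi HP ltac:(lia)) as [h1 h2].
      fold (s i) in h1, h2. repeat split; auto; try lra. apply Hpos; lia.
    - apply Rlt_le, Rdiv_lt_0_compat; nra.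
    - intros m Hm Hl. apply grid_beta; auto. }
  set (SB := rsum K (fun x => T N (S (J (S x))))).
  set (SA := rsum K (fun x => T N (J (S x)))).
  assert (Hzero : term 0%nat <= INR n * INR K ^ 2 / (INR N * INR N) * SS).
  { unfold term.
    apply (JL k P (fun i => rho i 0%nat) s (1 - SB) (1 - SA) (/ INR n)).
    - intros i Hi HP.
      assert (Hsi : s i = rho i 0%nat + rsum K (fun x => rho i (S x))) by (unfold s; rewrite Hn, rsum_first; auto).
      assert (Hub : rsum K (fun x => rho i (S x)) <= SB * s i).
      { unfold SB. rewrite Rmult_comm, <- rsum_scal. apply rsum_le. intros x Hx.
        destruct (Hint i (S x) Hi HP ltac:(lia)). fold (s i) in *. lra. }
      assert (Hlb : SA * s i <= rsum K (fun x => rho i (S x))).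
      { unfold SA. rewrite Rmult_comm, <- rsum_scal. apply rsum_le. intros x Hx.
        destruct (Hint i (S x) Hi HP ltac:(lia)). fold (s i) in *. lra. }
      assert (Hn0 : s i <= INR n * rho i 0%nat).
      { unfold s. rewrite <- rsum_const. apply rsum_le. intros. apply Hmax; auto. }
      assert (HnR : 0 < INR n) by (rewrite Hn; apply lt_0_INR; lia).
      repeat split; auto; try nra.
      + apply Rmult_le_reg_l with (INR n); auto. replace (INR n * (/ INR n * s i)) with (s i) by (field; lra). lra.
      + apply Hpos; lia.
    - assert (0 < INR N * INR N) by nra. assert (0 <= INR n * INR K ^ 2).
      { apply Rmult_le_pos; [apply pos_INR| apply pow_le, pos_INR]. }
      apply Rmult_le_pos; auto. left; apply Rinv_0_lt_compat; auto.
    - intros m Hm Hl.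
      assert (HnR : 0 < INR n) by (rewrite Hn; apply lt_0_INR; lia).
      apply Rle_trans with ((1 - SA - (1 - SB)) ^ 2 / (4 * / INR n)); [apply quad_bound; [apply Rinv_0_lt_compat; auto| auto]|].
      assert (HD : (1 - SA) - (1 - SB) = rsum K (fun x => T N (S (J (S x))) - T N (J (S x)))) by (unfold SA, SB; rewrite rsum_minus; ring).
      assert (HD0 : 0 <= rsum K (fun x => T N (S (J (S x))) - T N (J (S x)))).
      { apply rsum_nonneg. intros x Hx. pose proof (T_mono N (J (S x)) (S (J (S x))) ltac:(lia) ltac:(lia)). lra. }
      assert (HD1 : rsum K (fun x => T N (S (J (S x))) - T N (J (S x))) <= INR K * (2 / INR N)).
      { rewrite <- rsum_const. apply rsum_le. intros x Hx. rewrite T_diff by lia.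
        assert (HJx : INR (J (S x)) + 1 <= INR N) by (rewrite <- S_INR; apply le_INR; apply HJ).
        apply Rmult_le_reg_r with (INR N * INR N); [nra|].
        replace ((2 * INR (J (S x)) + 1) / (INR N * INR N) * (INR N * INR N)) with (2 * INR (J (S x)) + 1) by (field; lra).
        replace (2 / INR N * (INR N * INR N)) with (2 * INR N) by (field; lra). lra. }
      rewrite HD.
      set (D := rsum K (fun x => T N (S (J (S x))) - T N (J (S x)))) in *.
      assert (D ^ 2 <= (INR K * (2 / INR N)) ^ 2) by (apply pow_incr; lra).
      replace ((INR K * (2 / INR N)) ^ 2) with (4 * (INR K ^ 2 / (INR N * INR N))) in H by (field; lra).
      replace (D ^ 2 / (4 * / INR n)) with (INR n * D ^ 2 / 4) by (field; lra).
      replace (INR n * INR K ^ 2 / (INR N * INR N)) with (INR n * (INR K ^ 2 / (INR N * INR N))) by (field; lra).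
      nra. }
  rewrite Hn, rsum_first. rewrite <- Hn.
  assert (rsum K (fun x => term (S x)) <= rsum K (fun _ => 9 / (4 * (INR N * INR N)) * SS)) by (apply rsum_le; auto).
  rewrite rsum_const in H.
  unfold eps.
  replace ((INR n * INR K ^ 2 + 9 / 4 * INR K) / (INR N * INR N) * SS)
    with (INR n * INR K ^ 2 / (INR N * INR N) * SS + INR K * (9 / (4 * (INR N * INR N)) * SS)) by (field; lra).
  lra.
Qed.


Open Scope nat_scope.

Lemma modn_self_add y n : (0 < n) -> (y + n) mod n = y mod n.
Proof. intros. replace (y + n) with (y + 1 * n) by lia. apply Nat.Div0.mod_add. Qed.

Lemma M0 n y t : y < n -> t < n -> ((y + (n - t)) mod n + t) mod n = y.
Proof.
  intros Hy Ht. rewrite Nat.Div0.add_mod_idemp_l. replace (y + (n - t) + t) with (y + n) by lia.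
  rewrite modn_self_add by lia. apply Nat.mod_small; auto.
Qed.

Lemma M1 n a u t : a < n -> u < n -> t < n -> ((t + a) mod n = u <-> t = (u + (n - a)) mod n).
Proof.
  intros Ha Hu Ht. split; intros H.
  - subst u. rewrite Nat.Div0.add_mod_idemp_l. replace (t + a + (n - a)) with (t + n) by lia.
    rewrite modn_self_add by lia. rewrite Nat.mod_small; auto.
  - subst t. rewrite Nat.Div0.add_mod_idemp_l. replace (u + (n - a) + a) with (u + n) by lia.
    rewrite modn_self_add by lia. apply Nat.mod_small; auto.
Qed.

Lemma mod_cancel n A B r : 0 < n -> r < n -> (A + r) mod n = (B + r) mod n -> A mod n = B mod n.
Proof.
  intros Hn Hr H.
  rewrite <- (modn_self_add A n Hn), <- (modn_self_add B n Hn).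
  replace (A + n) with ((A + r) + (n - r)) by lia. replace (B + n) with ((B + r) + (n - r)) by lia.
  rewrite <- (Nat.Div0.add_mod_idemp_l (A + r)), <- (Nat.Div0.add_mod_idemp_l (B + r)), H. auto.
Qed.

Lemma M2 n a u x : a < n -> u < n -> x < n ->
  (x + (n - (u + (n - a)) mod n)) mod n = ((x + (n - u)) mod n + a) mod n.
Proof.
  intros Ha Hu Hx. rewrite Nat.Div0.add_mod_idemp_l.
  set (r := (u + (n - a)) mod n).
  assert (Hr : r < n) by (apply Nat.mod_upper_bound; lia).
  assert (Hra : (r + a) mod n = u) by (apply (proj2 (M1 n a u r Ha Hu Hr)); auto).
  apply (mod_cancel n _ _ r); [lia|auto|].
  replace (x + (n - r) + r) with (x + n) by lia.
  replace (x + (n - u) + a + r) with (x + (n - u) + (r + a)) by lia.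
  rewrite <- (Nat.Div0.add_mod_idemp_r (x + (n - u)) (r + a)), Hra. replace (x + (n - u) + u) with (x + n) by lia. auto.
Qed.

Lemma M3 n c u c' u' : u < n -> u' < n -> c * n + u = c' * n + u' -> c = c' /\ u = u'.
Proof.
  intros Hu Hu' H.
  assert (E1 : (c * n + u) / n = c) by (rewrite Nat.add_comm, Nat.div_add by lia; rewrite Nat.div_small; lia).
  assert (E2 : (c' * n + u') / n = c') by (rewrite Nat.add_comm, Nat.div_add by lia; rewrite Nat.div_small; lia).
  assert (c = c') by (rewrite <- E1, <- E2, H; auto). subst. lia.
Qed.

Open Scope R_scope.


Lemma partition k Nc (code : nat -> nat) (g : nat -> R) :
  (forall i, (i < k)%nat -> (code i < Nc)%nat) ->
  rsum k g = rsum Nc (fun c => rsum k (fun i => if Nat.eqb (code i) c then g i else 0)).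
Proof.
  intros H. rewrite rsum_swap. apply rsum_ext. intros i Hi.
  rewrite (rsum_ext Nc _ (fun c => if Nat.eqb c (code i) then g i else 0)).
  - symmetry. apply (rsum_delta Nc (code i) (fun _ => g i)). auto.
  - intros c Hc. rewrite Nat.eqb_sym. auto.
Qed.

Lemma pull2 k n c (g : nat -> nat -> R) :
  c * rsum k (fun i => rsum n (fun t => g i t)) = rsum k (fun i => rsum n (fun t => c * g i t)).
Proof. rewrite <- rsum_scal. apply rsum_ext. intros. rewrite rsum_scal. auto. Qed.

Lemma gc_le N q l : (gc N q l <= l)%nat.
Proof. induction l; simpl; [lia|]. destruct (Rle_dec _ _); lia. Qed.


Theorem theorem8 (nx ny : nat) (W : channel) (L : nat) :
  (2 <= nx)%nat ->
  is_channel nx ny W ->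
  cyclo_symmetric nx ny W ->
  (2 * nx < ny)%nat ->
  (2 * nx <= L)%nat ->
  Nat.divide nx L ->
  exists (nz : nat) (Q : channel),
    is_channel nx nz Q /\
    degraded nx ny nz Q W /\
    (nz <= L)%nat /\
    cyclo_symmetric nx nz Q /\
    mi_uniform nx ny W - mi_uniform nx nz Q
      <= nu nx * Rpower (INR L) (- (2 / (INR nx - 1))).
Proof.
  intros Hn2 [HWp HWs] (k & f & Hny & Hflt & Hinj & Hsurj & Hcyc) _ HL2 [M HM].
  set (n := nx) in *.
  set (K := (n - 1)%nat).
  assert (HnK : n = S K) by (unfold K; lia).
  assert (HK : (1 <= K)%nat) by (unfold K; lia).
  assert (HM2 : (1 <= M)%nat) by nia.
  destruct (cntN_main M K HK HM2) as (HN1 & HNM & HMN).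
  set (N := cntN M K M) in *.
  set (Nc := (N ^ K)%nat).
  set (nz := (Nc * n)%nat).
  pose (a := fun i => am (fun x => W (f i 0%nat) x) (n - 1)).
  pose (rho := fun i x => W (f i 0%nat) ((x + a i) mod n)%nat).
  pose (s := fun i => rsum n (rho i)).
  pose (J := fun i x => gc N (rho i x / s i) (N - 1)).
  pose (code := fun i => enc N K (J i)).
  pose (e := fun i t => (code i * n + (t + a i) mod n)%nat).
  pose (Phi := fun z y => rsum k (fun i => rsum n (fun t =>
                 if andb (Nat.eqb (f i t) y) (Nat.eqb z (e i t)) then 1 else 0))).
  pose (Q := fun z x => rsum ny (fun y => W y x * Phi z y)).
  pose (R := fun c x => rsum k (fun i => if Nat.eqb (code i) c then rho i x else 0)).
  assert (Hn0 : (0 < n)%nat) by lia.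
  assert (Ha : forall i, (a i < n)%nat) by (intros; pose proof (am_le (fun x => W (f i 0%nat) x) (n - 1)); unfold a; lia).
  assert (HW1 : forall i t y, (i < k)%nat -> (t < n)%nat -> (y < n)%nat ->
            W (f i t) y = W (f i 0%nat) ((y + (n - t)) mod n)%nat).
  { intros i t y Hi Ht Hy.
    assert (Hx : ((y + (n - t)) mod n < n)%nat) by (apply Nat.mod_upper_bound; lia).
    rewrite (Hcyc i _ t Hi Hx Ht). rewrite M0; auto. }
  assert (Hrho0 : forall i x, (i < k)%nat -> (x < n)%nat -> 0 <= rho i x).
  { intros i x Hi Hx. unfold rho. apply HWp. apply Nat.mod_upper_bound; lia. apply Hflt; lia. }
  assert (Hmax : forall i x, (i < k)%nat -> (x < n)%nat -> rho i x <= rho i 0%nat).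
  { intros i x Hi Hx. unfold rho. rewrite Nat.add_0_l, (Nat.mod_small (a i)) by auto.
    unfold a at 2. apply am_max. pose proof (Nat.mod_upper_bound (x + a i) n ltac:(lia)). lia. }
  assert (HJ : forall i x, (J i x < N)%nat) by (intros; unfold J; pose proof (gc_le N (rho i x / s i) (N - 1)); lia).
  assert (Hcode : forall i, (code i < Nc)%nat) by (intros; unfold code, Nc; apply enc_lt; auto).
  assert (He : forall i t, (e i t < nz)%nat).
  { intros i t. unfold e, nz. pose proof (Hcode i). pose proof (Nat.mod_upper_bound (t + a i) n ltac:(lia)). nia. }

  assert (HPhi0 : forall z y, 0 <= Phi z y).
  { intros z y. unfold Phi. apply rsum_nonneg. intros. apply rsum_nonneg. intros.
    destruct (andb _ _); lra. }
  assert (HPhi1 : forall y, (y < ny)%nat -> rsum nz (fun z => Phi z y) = 1).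
  { intros y Hy. unfold Phi. rewrite rsum_swap.
    rewrite (rsum_ext k _ (fun i => rsum n (fun t => if Nat.eqb (f i t) y then 1 else 0))).
    - destruct (G1 k n ny f Hinj y (Hsurj y Hy)) as (i0 & t0 & _ & _ & _ & Hh).
      apply (Hh (fun _ _ => 1)).
    - intros i Hi. rewrite rsum_swap. apply rsum_ext. intros t Ht.
      destruct (Nat.eqb (f i t) y); simpl.
      + apply (rsum_delta nz (e i t) (fun _ => 1)). auto.
      + apply rsum_zero. }
  assert (HQ : forall c u x, (c < Nc)%nat -> (u < n)%nat -> (x < n)%nat ->
            Q (c * n + u)%nat x = R c ((x + (n - u)) mod n)%nat).
  { intros c u x Hc Hu Hx. unfold Q, Phi.
    rewrite (rsum_ext ny _ (fun y => rsum k (fun i => rsum n (fun t =>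
        if Nat.eqb (f i t) y then (if Nat.eqb (c * n + u)%nat (e i t) then W y x else 0) else 0)))).
    2:{ intros y Hy. rewrite pull2. apply rsum_ext. intros i Hi. apply rsum_ext. intros t Ht.
        destruct (Nat.eqb (f i t) y); destruct (Nat.eqb (c * n + u)%nat (e i t)); simpl; ring. }
    rewrite rsum_swap. unfold R. apply rsum_ext. intros i Hi. rewrite rsum_swap.
    rewrite (rsum_ext n _ (fun t => if Nat.eqb (c * n + u)%nat (e i t) then W (f i t) x else 0)).
    2:{ intros t Ht. rewrite (rsum_ext ny _ (fun y => if Nat.eqb y (f i t) then
            (if Nat.eqb (c * n + u)%nat (e i t) then W y x else 0) else 0)).
        - apply (rsum_delta ny (f i t) (fun y => if Nat.eqb (c * n + u)%nat (e i t) then W y x else 0)). auto.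
        - intros y Hy. rewrite Nat.eqb_sym. auto. }
    set (ts := ((u + (n - a i)) mod n)%nat).
    assert (Hts : (ts < n)%nat) by (apply Nat.mod_upper_bound; lia).
    destruct (Nat.eqb_spec (code i) c) as [Ec|Ec].
    - rewrite (rsum_ext n _ (fun t => if Nat.eqb t ts then W (f i t) x else 0)).
      + rewrite (rsum_delta n ts (fun t => W (f i t) x)) by auto.
        rewrite HW1 by auto. unfold rho. f_equal. unfold ts. apply M2; auto.
      + intros t Ht. unfold e. rewrite Ec.
        destruct (Nat.eqb_spec (c * n + u)%nat (c * n + (t + a i) mod n)%nat) as [E1|E1];
        destruct (Nat.eqb_spec t ts) as [E2|E2]; auto.
        * exfalso. apply E2. unfold ts. apply (M1 n (a i) u t); auto. lia.
        * exfalso. apply E1. f_equal. symmetry. apply (M1 n (a i) u t); auto.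
    - rewrite (rsum_ext n _ (fun _ => 0)). apply rsum_zero.
      intros t Ht. unfold e. destruct (Nat.eqb_spec (c * n + u)%nat (code i * n + (t + a i) mod n)%nat) as [E1|E1]; auto.
      exfalso. assert (Hm : ((t + a i) mod n < n)%nat) by (apply Nat.mod_upper_bound; lia).
      destruct (M3 n c u (code i) ((t + a i) mod n) Hu Hm E1). apply Ec; auto. }

  assert (HQch : is_channel n nz Q).
  { split.
    - intros x z Hx Hz. unfold Q. apply rsum_nonneg. intros y Hy.
      apply Rmult_le_pos; [apply HWp; auto| apply HPhi0].
    - intros x Hx. unfold Q. rewrite rsum_swap.
      rewrite (rsum_ext ny _ (fun y => W y x)).
      + apply HWs; auto.
      + intros y Hy. rewrite rsum_scal, HPhi1 by auto. ring. }
  assert (HQcyc : cyclo_symmetric n nz Q).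
  { exists Nc, (fun c u => (c * n + u)%nat). split; [unfold nz; auto|].
    split; [intros; nia|]. split.
    - intros i t i' t' Hi Ht Hi' Ht' E. apply (M3 n i t i' t'); auto.
    - split.
      + intros y Hy. exists (y / n)%nat, (y mod n)%nat. split; [|split].
        * apply Nat.Div0.div_lt_upper_bound. unfold nz in Hy. lia.
        * apply Nat.mod_upper_bound; lia.
        * rewrite (Nat.div_mod_eq y n) at 3. lia.
      + intros c x t Hc Hx Ht. rewrite HQ, HQ; auto.
        2:{ apply Nat.mod_upper_bound; lia. }
        f_equal. rewrite Nat.sub_0_r, Nat.Div0.add_mod_idemp_l.
        replace (x + t + (n - t))%nat with (x + n)%nat by lia. auto. }
  idtac.

  assert (Hrr : forall i, (i < k)%nat -> Fv n (rho i) = Fv n (fun y => W (f i 0%nat) y)).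
  { intros i Hi. unfold rho. apply (Fv_shift n (a i) (fun y => W (f i 0%nat) y)). auto. }
  assert (HFW : rsum ny (fun y => Fv n (fun x => W y x)) = rsum k (fun i => INR n * Fv n (rho i))).
  { rewrite (G2 k n ny f _ Hflt Hinj Hsurj). apply rsum_ext. intros i Hi.
    rewrite <- rsum_const. apply rsum_ext. intros t Ht.
    rewrite (Fv_ext n _ (fun y => W (f i 0%nat) ((y + (n - t)) mod n)%nat)) by (intros; apply HW1; auto).
    rewrite (Fv_shift n (n - t) (fun y => W (f i 0%nat) y)) by auto. rewrite Hrr; auto. }
  assert (HFQ : rsum nz (fun z => Fv n (fun x => Q z x)) = rsum Nc (fun c => INR n * Fv n (R c))).
  { unfold nz. rewrite rsum_prod. apply rsum_ext. intros c Hc.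
    rewrite <- rsum_const. apply rsum_ext. intros u Hu.
    rewrite (Fv_ext n _ (fun x => R c ((x + (n - u)) mod n)%nat)) by (intros; apply HQ; auto).
    apply Fv_shift; auto. }
  assert (Hsum1 : rsum k s = 1).
  { assert (E1 : rsum ny (fun y => rsum n (fun x => W y x)) = INR n).
    { rewrite rsum_swap. rewrite (rsum_ext n _ (fun _ => 1)) by (intros; apply HWs; auto).
      rewrite rsum_const. ring. }
    rewrite (G2 k n ny f _ Hflt Hinj Hsurj) in E1.
    rewrite (rsum_ext k _ (fun i => INR n * s i)) in E1.
    - rewrite rsum_scal in E1. assert (0 < INR n) by (apply lt_0_INR; lia).
      apply Rmult_eq_reg_l with (INR n); lra.
    - intros i Hi. rewrite <- rsum_const. apply rsum_ext. intros t Ht.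
      rewrite (rsum_ext n _ (fun y => W (f i 0%nat) ((y + (n - t)) mod n)%nat)) by (intros; apply HW1; auto).
      rewrite (rsum_shift n (n - t) (fun y => W (f i 0%nat) y)) by auto.
      unfold s, rho. rewrite (rsum_shift n (a i) (fun y => W (f i 0%nat) y)) by auto. auto. }
  assert (Hclass : forall c, (c < Nc)%nat ->
     rsum k (fun i => if Nat.eqb (code i) c then Fv n (rho i) else 0) - Fv n (R c)
     <= eps n K N * rsum k (fun i => if Nat.eqb (code i) c then s i else 0)).
  { intros c Hc. apply (class_bound n K N k rho (fun i => Nat.eqb (code i) c) (dec N K c)); auto.
    - intros. apply dec_lt. lia.
    - intros i x Hi HP Hx. apply Nat.eqb_eq in HP.
      assert (Ed : dec N K c x = J i x).
      { rewrite <- HP. unfold code. apply dec_enc; auto; lia. }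
      rewrite Ed. fold (s i).
      assert (Hxn : (x < n)%nat) by lia.
      assert (Hle : rho i x <= s i).
      { unfold s. apply (rsum_term_le n (rho i) x); auto. }
      pose proof (Hrho0 i x Hi Hxn).
      destruct (Req_dec (s i) 0) as [Es|Es].
      + rewrite Es. assert (rho i x = 0) by lra. rewrite H0. lra.
      + assert (Hsp : 0 < s i) by lra.
        assert (Hq0 : 0 <= rho i x / s i) by (apply Rmult_le_pos; [lra| left; apply Rinv_0_lt_compat; lra]).
        assert (Hq1 : rho i x / s i <= 1).
        { apply Rmult_le_reg_r with (s i); auto. replace (rho i x / s i * s i) with (rho i x) by (field; lra). lra. }
        destruct (grid_interval N _ ltac:(lia) Hq0 Hq1) as (_ & G1' & G2').
        fold (J i x) in G1', G2'.
        split.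
        * apply Rmult_le_compat_r with (r := s i) in G1'; [|lra].
          replace (rho i x / s i * s i) with (rho i x) in G1' by (field; lra). auto.
        * apply Rmult_le_compat_r with (r := s i) in G2'; [|lra].
          replace (rho i x / s i * s i) with (rho i x) in G2' by (field; lra). auto. }
  exists nz, Q. split; [auto|]. split.
  { exists Phi. split; [|intros; reflexivity]. split.
    - intros; apply HPhi0.
    - intros y Hy. apply HPhi1. auto. }
  split; [unfold nz, Nc; rewrite HM; nia|].
  split; [auto|].
  rewrite (mi_decomp n ny W Hn0 (conj HWp HWs)), (mi_decomp n nz Q Hn0 HQch).
  rewrite HFW, HFQ, !rsum_scal.
  assert (HnR : 0 < INR n) by (apply lt_0_INR; lia).
  replace (/ INR n * (INR n * rsum k (fun i => Fv n (rho i))) + ln (INR n) -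
    (/ INR n * (INR n * rsum Nc (fun c => Fv n (R c))) + ln (INR n)))
    with (rsum k (fun i => Fv n (rho i)) - rsum Nc (fun c => Fv n (R c))) by (field; lra).
  rewrite (partition k Nc code (fun i => Fv n (rho i))) by auto.
  rewrite <- rsum_minus.
  apply Rle_trans with (rsum Nc (fun c => eps n K N * rsum k (fun i => if Nat.eqb (code i) c then s i else 0))).
  { apply rsum_le. intros c Hc. apply Hclass; auto. }
  rewrite rsum_scal, <- (partition k Nc code s) by auto. rewrite Hsum1, Rmult_1_r.
  unfold eps. rewrite HM, Nat.mul_comm. rewrite HnK. apply numeric; auto.
Qed.
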